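(* Let $M$ be a rank-3 paving matroid on a linearly ordered finite ground set $E$, and let $M^0$ and $M^1$ be the rank-3 sparse paving matroids on $E$ whose sets of circuit-hyperplanes are $\mathcal{V}^0(M)$ and $\mathcal{V}^1(M)$ respectively. If $M$ has no minor isomorphic to $\mathcal{W}^3$ or $M(K_4)$, then neither $M^0$ nor $M^1$ has a minor isomorphic to $\mathcal{W}^3$ or $M(K_4)$.
   Context: A matroid is paving if every circuit has size $r(M)$ or $r(M)+1$; it is sparse paving if every nonspanning circuit is a hyperplane. For a hyperplane $H$ of $M$ (a rank-2 flat), let $\mathcal{V}(H)$ be the set of 3-subsets $V\subseteq H$ that are consecutive in $H$, i.e. there are no $v,v'\in V$ and $h\in H\setminus V$ with $v<h<v'$. Listing them in increasing order as $\mathcal{V}(H)=\{V_H^0,V_H^1,\dots,V_H^{|H|-3}\}$ (so consecutive ones share exactly two elements), set $\mathcal{V}^0(H)=\{V_H^i: i \text{ even}\}$, $\mathcal{V}^1(H)=\{V_H^i: i\text{ odd}\}$, and $\mathcal{V}^k(M)=\bigcup_{H}\mathcal{V}^k(H)$ over all hyperplanes $H$ of $M$, for $k\in\{0,1\}$. It is known (Pendavingh–Van der Pol) that each $\mathcal{V}^k(M)$ is the set of circuit-hyperplanes of a rank-3 sparse paving matroid on $E$. $\mathcal{W}^3$ is the rank-3 matroid on $\{a,b,c,d,e,f\}$ whose only dependent 3-sets are $\{a,b,c\},\{c,d,e\},\{e,f,a\}$; $M(K_4)$ is the rank-3 matroid on $\{a,b,c,d,e,f\}$ whose only dependent 3-sets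 are $\{a,b,c\},\{c,d,e\},\{e,f,a\},\{b,d,f\}$. *)

(* Defs.v *)
From mathcomp Require Import all_boot all_order.
Set Implicit Arguments. Unset Strict Implicit. Unset Printing Implicit Defensive.
Import Order.TTheory.

Section Matroids.
Variable T : finType.
Implicit Types (E X Y C D F V H : {set T}) (I : {set T} -> bool).

Definition is_matroid E I : Prop :=
  [/\ I set0,
      forall X, I X -> X \subset E,
      forall X Y, Y \subset X -> I X -> I Y &
      forall X Y, I X -> I Y -> #|X| < #|Y| ->
        exists2 y, y \in Y :\: X & I (y |: X)].

Definition rk I X : nat := \max_(Y : {set T} | (Y \subset X) && I Y) #|Y|.

Definition circuit E I C : bool :=
  [&& C \subset E, ~~ I C & [forall x in C, I (C :\ x)]].

Definition flat E I F : bool :=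
  (F \subset E) && [forall x in E :\: F, rk I F < rk I (x |: F)].

Definition hyperplane E I H : bool :=
  flat E I H && (rk I H == (rk I E).-1).

Definition paving E I : Prop :=
  forall C, circuit E I C -> rk I E <= #|C| <= (rk I E).+1.

Definition sparse_paving E I : Prop :=
  paving E I /\ forall C, circuit E I C -> rk I C < rk I E -> hyperplane E I C.

Definition circuit_hyperplane E I X : bool := circuit E I X && hyperplane E I X.

(* Minors: M / C \ D, for disjoint C, D contained in E.  Ground set E \ (C u D);
   X is independent in M/C\D iff X is in the ground set and r(X u C) = |X| + r(C). *)
Definition minor_indep E I C D X : bool :=
  (X \subset E :\: (C :|: D)) && (rk I (X :|: C) == #|X| + rk I C).

Definition has_minor_iso E I (J : {set 'I_6} -> bool) : Prop :=
  exists C D, [/\ C \subset E, D \subset E, [disjoint C & D] &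
    exists g : 'I_6 -> T, [/\ injective g, g @: setT = E :\: (C :|: D) &
       forall X : {set 'I_6}, minor_indep E I C D (g @: X) = J X]].

End Matroids.

(* The two excluded matroids, on {a,b,c,d,e,f} = {0,1,2,3,4,5} = 'I_6 *)
Definition e6 (i : nat) : 'I_6 := inord i.
Definition tri (i j k : nat) : {set 'I_6} := [set e6 i; e6 j; e6 k].

Definition W3_indep (X : {set 'I_6}) : bool :=
  (#|X| <= 3) && [&& X != tri 0 1 2, X != tri 2 3 4 & X != tri 4 5 0].

Definition MK4_indep (X : {set 'I_6}) : bool :=
  (#|X| <= 3) && [&& X != tri 0 1 2, X != tri 2 3 4, X != tri 4 5 0 & X != tri 1 3 5].

Section Consecutive.
Variables (d : Order.disp_t) (T : finOrderType d).
Implicit Types (E V H : {set T}) (I : {set T} -> bool).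

Definition consecutive H V : bool :=
  [&& V \subset H, #|V| == 3 &
      [forall v in V, forall v' in V, forall h in H :\: V,
         ~~ ((v < h)%O && (h < v')%O)]].

(* position of the consecutive triple V in the increasing list V_H^0, V_H^1, ...:
   the number of elements of H below every element of V (i.e. below min V) *)
Definition cons_index H V : nat := #|[set h in H | [forall v in V, (h < v)%O]]|.

(* V \in V^k(H), with k = false for 0 (even indices) and k = true for 1 (odd) *)
Definition in_Vk_H (k : bool) H V : bool :=
  consecutive H V && (odd (cons_index H V) == k).

Definition in_Vk (k : bool) E I V : bool :=
  [exists H : {set T}, hyperplane E I H && in_Vk_H k H V].

End Consecutive.

(* Main.v *)
Require Import Defs.
From mathcomp Require Import all_boot all_order zify.
Set Implicit Arguments. Unset Strict Implicit. Unset Printing Implicit Defensive.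
Import Order.TTheory.

Section Mat.
Variable T : finType.
Implicit Types (E X Y C D H : {set T}) (I : {set T} -> bool).

Lemma rk_ge I X Y : Y \subset X -> I Y -> #|Y| <= rk I X.
Proof. by move=> sYX iY; rewrite /rk; apply: (@leq_bigmax_cond _ (fun Z : {set T} => (Z \subset X) && I Z) (fun Z => #|Z|)); rewrite sYX. Qed.

Lemma rk_le I X m : (forall Y, Y \subset X -> I Y -> #|Y| <= m) -> rk I X <= m.
Proof. by move=> h; apply/bigmax_leqP => Y /andP[]; apply: h. Qed.

Lemma rk_ex E I X : is_matroid E I -> exists Y, [/\ Y \subset X, I Y & #|Y| = rk I X].
Proof.
case=> i0 _ _ _.
have: 0 < #|[pred Z : {set T} | (Z \subset X) && I Z]|.
  by apply/card_gt0P; exists set0; rewrite inE sub0set i0.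
move=> /(@eq_bigmax_cond _ _ (fun Z : {set T} => #|Z|)) [Y].
by rewrite inE => /andP[sYX iY] Hm; exists Y; split => //; rewrite -Hm.
Qed.

Lemma rk_card I X : rk I X <= #|X|.
Proof. by apply: rk_le => Y sYX _; apply: subset_leq_card. Qed.

Lemma rk_mono I X Y : X \subset Y -> rk I X <= rk I Y.
Proof. by move=> sXY; apply: rk_le => Z sZX iZ; apply: rk_ge (subset_trans sZX sXY) iZ. Qed.

Lemma rk_indep E I X : is_matroid E I -> (rk I X == #|X|) = I X.
Proof.
move=> hM; apply/idP/idP.
  move/eqP; have [Y [sYX iY cY]] := rk_ex X hM.
  rewrite -cY => /esym cXY.
  have eYX: Y == X.
    rewrite eqEcard sYX /=. rewrite cXY. done.
  move/eqP: eYX => eYX.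
  by rewrite -eYX.
by move=> iX; rewrite eqn_leq rk_card rk_ge.
Qed.

Lemma indep_sub E I X : is_matroid E I -> I X -> X \subset E.
Proof. by case=> _ h _ _; apply: h. Qed.

Lemma dep_circuit E I X : is_matroid E I -> X \subset E -> ~~ I X ->
  exists2 C : {set T}, C \subset X & circuit E I C.
Proof.
move=> hM; elim: {X}_.+1 {-2}X (ltnSn #|X|) => // n IH X ltXn sXE dX.
case: (boolP [forall x in X, I (X :\ x)]) => [hall|].
  by exists X => //; rewrite /circuit sXE dX hall.
rewrite negb_forall_in => /existsP [x /andP [xX dXx]].
have ltx : #|X :\ x| < n.
  by rewrite -ltnS (leq_trans _ ltXn) // ltnS (cardsD1 x X) xX.
have [C sC cC] := IH (X :\ x) ltx (subset_trans (subD1set X x) sXE) dXx.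
by exists C => //; apply: subset_trans sC (subD1set X x).
Qed.

Lemma circuit_card E I C : paving E I -> rk I E = 3 -> circuit E I C -> 3 <= #|C|.
Proof. by move=> hP r3 /hP; rewrite r3 => /andP[]. Qed.

Lemma small_indep E I X : is_matroid E I -> paving E I -> rk I E = 3 ->
  X \subset E -> #|X| <= 2 -> I X.
Proof.
move=> hM hP r3 sXE cX; apply/negPn/negP => dX.
have [C sCX cC] := dep_circuit hM sXE dX.
have := circuit_card hP r3 cC.
move: (subset_leq_card sCX) cX; lia.
Qed.

Lemma indep_le3 E I X : rk I E = 3 -> I X -> X \subset E -> #|X| <= 3.
Proof. by move=> r3 iX sXE; rewrite -r3; apply: rk_ge. Qed.


Lemma cards3 (x y z : T) : x != y -> y != z -> x != z -> #|[set x; y; z]| = 3.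
Proof.
move=> xy yz xz.
have -> : [set x; y; z] = x |: [set y; z].
  by apply/setP=> u; rewrite !inE orbA.
by rewrite cardsU1 cards2 !inE negb_or xy xz yz.
Qed.

Lemma hyp_rk E I H : rk I E = 3 -> hyperplane E I H -> rk I H = 2.
Proof. by move=> r3 /andP[_ /eqP]; rewrite r3. Qed.

Lemma hyp_dep E I H X : rk I E = 3 -> hyperplane E I H -> X \subset H -> 3 <= #|X| -> ~~ I X.
Proof.
move=> r3 hH sXH cX; apply/negP => iX.
by have := rk_ge sXH iX; rewrite (hyp_rk r3 hH); lia.
Qed.

Lemma line_closed E I H (x y z : T) : is_matroid E I -> paving E I -> rk I E = 3 ->
  hyperplane E I H -> x \in H -> y \in H -> x != y -> z \in E ->
  ~~ I [set x; y; z] -> z \in H.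
Proof.
move=> hM hP r3 hH xH yH xy zE dxyz.
have r2 := hyp_rk r3 hH.
have hH0 := hH.
case/andP: hH => /andP[sHE /forallP fl] _.
apply/negPn/negP=> zH.
have := fl z; rewrite in_setD zH zE /= r2 => ltr.
have [B [sB iB cB]] := rk_ex (z |: H) hM.
have ixy : I [set x; y].
  apply: (small_indep hM hP r3); last by rewrite cards2; case: (x != y).
  by apply/subsetP=> u; rewrite !inE => /orP[] /eqP->; apply: (subsetP sHE).
case: hM => _ _ _ aug.
have [w] : exists2 w, w \in B :\: [set x; y] & I (w |: [set x; y]).
  by apply: aug => //; rewrite cards2 xy cB.
rewrite in_setD => /andP[wxy wB] iw.
move: wxy; rewrite !inE negb_or => /andP[wx wy].
have := subsetP sB w wB; rewrite in_setU1 => /orP[/eqP wz|wH].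
  move: dxyz iw; rewrite wz.
  have -> : z |: [set x; y] = [set x; y; z].
    by apply/setP=> u; rewrite !inE; case: (u == z); case: (u == x); case: (u == y).
  by move/negbTE->.
have : ~~ I (w |: [set x; y]).
  apply: (hyp_dep r3 hH0).
  - by apply/subsetP=> u; rewrite !inE => /orP[/eqP->|/orP[]/eqP->].
  by rewrite cardsU1 cards2 !inE negb_or wx wy xy.
by rewrite iw.
Qed.

Lemma hyp_sub E I H H' (x y : T) : is_matroid E I -> paving E I -> rk I E = 3 ->
  hyperplane E I H -> hyperplane E I H' -> x \in H -> y \in H -> x \in H' -> y \in H' ->
  x != y -> H' \subset H.
Proof.
move=> hM hP r3 hH hH' xH yH xH' yH' xy.
apply/subsetP=> z zH'.
case: (eqVneq z x) => [->//|zx]; case: (eqVneq z y) => [->//|zy].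
have sH'E : H' \subset E by case/andP: hH' => /andP[].
apply: (line_closed hM hP r3 hH xH yH xy (subsetP sH'E z zH')).
apply: (hyp_dep r3 hH').
  by apply/subsetP=> u; rewrite !inE => /orP[/orP[]|]/eqP->.
by rewrite cards3 // eq_sym.
Qed.

Lemma hyp_eq E I H H' (x y : T) : is_matroid E I -> paving E I -> rk I E = 3 ->
  hyperplane E I H -> hyperplane E I H' -> x \in H -> y \in H -> x \in H' -> y \in H' ->
  x != y -> H = H'.
Proof.
move=> hM hP r3 hH hH' xH yH xH' yH' xy; apply/eqP; rewrite eqEsubset.
by rewrite (hyp_sub hM hP r3 hH' hH xH' yH' xH yH xy) (hyp_sub hM hP r3 hH hH' xH yH xH' yH' xy).
Qed.

End Mat.


Definition tpn (i x : nat) : bool :=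
  match i with
  | 0 => (x == 0) || (x == 1) || (x == 2)
  | 1 => (x == 2) || (x == 3) || (x == 4)
  | _ => (x == 4) || (x == 5) || (x == 0)
  end.
Definition t (i : nat) : {set 'I_6} :=
  match i with 0 => tri 0 1 2 | 1 => tri 2 3 4 | _ => tri 4 5 0 end.
Definition o3 (x : nat) : bool := (x == 1) || (x == 3) || (x == 5).

Lemma e6K m : m < 6 -> val (e6 m) = m.
Proof. by move=> h; apply: inordK. Qed.

Lemma mem_tri (x : 'I_6) i j k : i < 6 -> j < 6 -> k < 6 ->
  (x \in tri i j k) = (val x == i) || (val x == j) || (val x == k).
Proof. by move=> hi hj hk; rewrite /tri !inE -!val_eqE /= !e6K. Qed.

Lemma mem_t i (x : 'I_6) : (x \in t i) = tpn i x.
Proof. by case: i => [|[|i]]; rewrite /t mem_tri. Qed.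

Lemma mem_135 (x : 'I_6) : (x \in tri 1 3 5) = o3 x.
Proof. by rewrite mem_tri. Qed.

Lemma card_tri i j k : i < 6 -> j < 6 -> k < 6 -> i != j -> j != k -> i != k ->
  #|tri i j k| = 3.
Proof.
move=> hi hj hk ij jk ik.
have -> : tri i j k = e6 i |: [set e6 j; e6 k].
  by apply/setP=> u; rewrite /tri !inE orbA.
by rewrite cardsU1 cards2 !inE -!val_eqE /= !e6K // (negbTE ij) (negbTE jk) (negbTE ik).
Qed.

Lemma card_t i : #|t i| = 3.
Proof. by case: i => [|[|i]]; rewrite /t card_tri. Qed.

Definition allin i p q r := [&& tpn i p, tpn i q & tpn i r].

Definition C1b : bool :=
  all (fun p => all (fun q => all (fun r =>
    [&& p != q, q != r & p != r] ==> ~~ allin 0 p q r ==> ~~ allin 1 p q r ==>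
    ~~ allin 2 p q r ==> ~~ [&& o3 p, o3 q & o3 r] ==>
    has (fun i => [|| [&& tpn i p, tpn i q & ~~ tpn i r],
                      [&& tpn i p, tpn i r & ~~ tpn i q] |
                      [&& tpn i q, tpn i r & ~~ tpn i p]]) (iota 0 3))
    (iota 0 6)) (iota 0 6)) (iota 0 6).
Lemma C1bT : C1b. Proof. by vm_compute. Qed.

Definition C2b : bool :=
  all (fun i => all (fun r => ~~ tpn i r ==>
    has (fun j => has (fun s => [&& tpn j r, tpn i s & tpn j s]) (iota 0 6)) (iota 0 3))
    (iota 0 6)) (iota 0 3).
Lemma C2bT : C2b. Proof. by vm_compute. Qed.

Definition C3b : bool :=
  all (fun i => all (fun j => all (fun k => (i != j) ==>
    has (fun u => has (fun v => [&& u != v, tpn k u, tpn k v, tpn i u || tpn j u & tpn i v || tpn j v])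
      (iota 0 6)) (iota 0 6)) (iota 0 3)) (iota 0 3)) (iota 0 3).
Lemma C3bT : C3b. Proof. by vm_compute. Qed.

Lemma C1 (p q r : 'I_6) : p != q -> q != r -> p != r ->
  ~~ allin 0 p q r -> ~~ allin 1 p q r -> ~~ allin 2 p q r -> ~~ [&& o3 p, o3 q & o3 r] ->
  exists2 i, i < 3 & [|| [&& tpn i p, tpn i q & ~~ tpn i r],
                      [&& tpn i p, tpn i r & ~~ tpn i q] |
                      [&& tpn i q, tpn i r & ~~ tpn i p]].
Proof.
move=> pq qr pr a0 a1 a2 o.
have := C1bT; move/allP/(_ (val p)); rewrite mem_iota ltn_ord => /(_ isT).
move/allP/(_ (val q)); rewrite mem_iota ltn_ord => /(_ isT).
move/allP/(_ (val r)); rewrite mem_iota ltn_ord => /(_ isT).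
rewrite !val_eqE pq qr pr a0 a1 a2 o !implyTb => /hasP [i]; rewrite mem_iota => /andP[_ hi] h.
by exists i.
Qed.

Lemma C2 i (r : 'I_6) : i < 3 -> ~~ tpn i r ->
  exists j, exists s : 'I_6, [/\ j < 3, tpn j r, tpn i s & tpn j s].
Proof.
move=> hi nr.
have := C2bT; move/allP/(_ i); rewrite mem_iota hi => /(_ isT).
move/allP/(_ (val r)); rewrite mem_iota ltn_ord => /(_ isT).
rewrite nr implyTb => /hasP [j]; rewrite mem_iota => /andP[_ hj] /hasP [s].
rewrite mem_iota => /andP[_ hs] /and3P[h1 h2 h3].
by exists j, (Ordinal hs).
Qed.

Lemma C3 i j k : i < 3 -> j < 3 -> k < 3 -> i != j ->
  exists u, exists v : 'I_6,
    [/\ u != v, tpn k u, tpn k v, tpn i u || tpn j u & tpn i v || tpn j v].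
Proof.
move=> hi hj hk ij.
have := C3bT; move/allP/(_ i); rewrite mem_iota hi => /(_ isT).
move/allP/(_ j); rewrite mem_iota hj => /(_ isT).
move/allP/(_ k); rewrite mem_iota hk => /(_ isT).
rewrite ij implyTb => /hasP [u]; rewrite mem_iota => /andP[_ hu] /hasP [v].
rewrite mem_iota => /andP[_ hv] /and5P [uv ku kv iu iv].
by exists (Ordinal hu), (Ordinal hv); split.
Qed.


Section Ord.
Variables (d : Order.disp_t) (T : finOrderType d).

Lemma cons_app (H V : {set T}) v v' h : consecutive H V -> v \in V -> v' \in V ->
  h \in H -> h \notin V -> ~~ ((v < h)%O && (h < v')%O).
Proof.
case/and3P=> _ _ /forallP/(_ v)/implyP f vV v'V hH hV.
move: (f vV) => /forallP/(_ v')/implyP/(_ v'V)/forallP/(_ h)/implyP; apply.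
by rewrite in_setD hV hH.
Qed.

Lemma between3 (x y z : T) : x != y -> y != z -> x != z ->
  [\/ ((x < y)%O && (y < z)%O) || ((z < y)%O && (y < x)%O),
      ((y < x)%O && (x < z)%O) || ((z < x)%O && (x < y)%O) |
      ((x < z)%O && (z < y)%O) || ((y < z)%O && (z < x)%O)].
Proof.
move=> nxy nyz nxz.
case: (ltgtP x y) => [xy|yx|e]; last by rewrite e eqxx in nxy.
  case: (ltgtP y z) => [yz|zy|e]; last by rewrite e eqxx in nyz.
    by constructor 1.
  case: (ltgtP x z) => [xz|zx|e]; last by rewrite e eqxx in nxz.
    by constructor 3.
  by constructor 2.
case: (ltgtP x z) => [xz|zx|e]; last by rewrite e eqxx in nxz.
  by constructor 2.
case: (ltgtP y z) => [yz|zy|e]; last by rewrite e eqxx in nyz.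
  by constructor 3.
by constructor 1.
Qed.

Lemma orderc (H : {set T}) (g : 'I_6 -> T) : injective g ->
  (forall i, i < 3 -> consecutive H (g @: t i)) -> False.
Proof.
move=> ginj hC.
have mg i m : m < 6 -> (g (e6 m) \in g @: t i) = tpn i m.
  by move=> hm; rewrite mem_imset // mem_t e6K.
have inH i m : i < 3 -> m < 6 -> tpn i m -> g (e6 m) \in H.
  move=> hi hm hm'; have /and3P[s _ _] := hC i hi.
  by apply: (subsetP s); rewrite mg.
have ne m n : m < 6 -> n < 6 -> m != n -> g (e6 m) != g (e6 n).
  by move=> hm hn mn; rewrite (inj_eq ginj) -val_eqE /= !e6K.
have C0 := hC 0 isT; have C1 := hC 1 isT; have C2 := hC 2 isT.
case: (between3 (ne 0 2 isT isT isT) (ne 2 4 isT isT isT) (ne 0 4 isT isT isT)).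
- case/orP => h.
  + by move: (cons_app C2 (v := g (e6 0)) (v' := g (e6 4)) (h := g (e6 2))); rewrite !mg // (inH 0 2) // h => /(_ isT isT isT isT).
  + by move: (cons_app C2 (v := g (e6 4)) (v' := g (e6 0)) (h := g (e6 2))); rewrite !mg // (inH 0 2) // h => /(_ isT isT isT isT).
- case/orP => h.
  + by move: (cons_app C1 (v := g (e6 2)) (v' := g (e6 4)) (h := g (e6 0))); rewrite !mg // (inH 0 0) // h => /(_ isT isT isT isT).
  + by move: (cons_app C1 (v := g (e6 4)) (v' := g (e6 2)) (h := g (e6 0))); rewrite !mg // (inH 0 0) // h => /(_ isT isT isT isT).
- case/orP => h.
  + by move: (cons_app C0 (v := g (e6 0)) (v' := g (e6 2)) (h := g (e6 4))); rewrite !mg // (inH 1 4) // h => /(_ isT isT isT isT).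
  + by move: (cons_app C0 (v := g (e6 2)) (v' := g (e6 0)) (h := g (e6 4))); rewrite !mg // (inH 1 4) // h => /(_ isT isT isT isT).
Qed.

End Ord.


Lemma set3C (T : finType) (a b c : T) : [set a; c; b] = [set a; b; c].
Proof. by apply/setP=> u; rewrite !inE; case: (u == a); case: (u == b); case: (u == c). Qed.
Lemma set3R (T : finType) (a b c : T) : [set b; c; a] = [set a; b; c].
Proof. by apply/setP=> u; rewrite !inE; case: (u == a); case: (u == b); case: (u == c). Qed.

Lemma imset3 (T : finType) (g : 'I_6 -> T) (p q r : 'I_6) :
  g @: [set p; q; r] = [set g p; g q; g r].
Proof. by rewrite !imsetU !imset_set1. Qed.

Lemma neq_witness (T : finType) (A B : {set T}) x : x \in A -> x \notin B -> A != B.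
Proof. by move=> xA xB; apply/eqP => e; move: xB; rewrite -e xA. Qed.

Lemma W3_135 : W3_indep (tri 1 3 5).
Proof.
rewrite /W3_indep card_tri //=.
rewrite (@neq_witness _ _ _ (e6 3)) ?mem_tri ?e6K //.
rewrite (@neq_witness _ _ _ (e6 1)) ?mem_tri ?e6K //.
by rewrite (@neq_witness _ _ _ (e6 1)) ?mem_tri ?e6K.
Qed.

Lemma MK4_135 : MK4_indep (tri 1 3 5) = false.
Proof. by rewrite /MK4_indep eqxx !andbF. Qed.

Lemma eq_t3 (p q r : 'I_6) i : #|[set p; q; r]| = 3 -> ([set p; q; r] == t i) = allin i p q r.
Proof.
move=> c3; rewrite eqEcard card_t c3 leqnn andbT !subUset !sub1set !mem_t /allin.
by case: (tpn i p); case: (tpn i q); case: (tpn i r).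
Qed.

Lemma eq_135 (p q r : 'I_6) : #|[set p; q; r]| = 3 ->
  ([set p; q; r] == tri 1 3 5) = [&& o3 p, o3 q & o3 r].
Proof.
move=> c3; rewrite eqEcard card_tri // c3 leqnn andbT !subUset !sub1set !mem_135.
by case: (o3 p); case: (o3 q); case: (o3 r).
Qed.

Lemma mside d (T : finOrderType d) (E : {set T}) (I : {set T} -> bool)
  (g : 'I_6 -> T) (Hf : nat -> {set T}) :
  is_matroid E I -> rk I E = 3 -> paving E I -> injective g -> (forall x, g x \in E) ->
  (forall i, i < 3 -> hyperplane E I (Hf i)) ->
  (forall i, i < 3 -> consecutive (Hf i) (g @: t i)) ->
  has_minor_iso E I W3_indep \/ has_minor_iso E I MK4_indep.
Proof.
move=> hM r3 hP ginj gE hH hC.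
have gt i (x : 'I_6) : i < 3 -> tpn i x -> g x \in Hf i.
  move=> hi hx; have /and3P[s _ _] := hC i hi.
  by apply: (subsetP s); rewrite mem_imset // mem_t.
have neqH i j : i < 3 -> j < 3 -> i != j -> Hf i != Hf j.
  move=> hi hj ij; apply/eqP => eij.
  have allk k : k < 3 -> Hf k = Hf i.
    move=> hk; have [u [v [uv ku kv iu iv]]] := C3 hi hj hk ij.
    have uin : g u \in Hf i by case/orP: iu => h; [apply: gt | rewrite eij; apply: gt].
    have vin : g v \in Hf i by case/orP: iv => h; [apply: gt | rewrite eij; apply: gt].
    by apply: (hyp_eq hM hP r3 (hH k hk) (hH i hi) (gt k u hk ku) (gt k v hk kv) uin vin); rewrite (inj_eq ginj).
  by apply: (@orderc _ _ (Hf i) g ginj) => k hk; rewrite -(allk k hk); apply: hC.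
have capH i (r : 'I_6) : i < 3 -> g r \in Hf i -> tpn i r.
  move=> hi grH; apply/negPn/negP => nr.
  have [j [s [hj jr si js]]] := C2 hi nr.
  have ij : i != j by apply/eqP => e; move: nr; rewrite e jr.
  have sr : s != r by apply/eqP => e; move: nr; rewrite -e si.
  move/eqP: (neqH i j hi hj ij); apply.
  by apply: (hyp_eq hM hP r3 (hH i hi) (hH j hj) (gt i s hi si) grH (gt j s hj js) (gt j r hj jr)); rewrite (inj_eq ginj).
have key3 i (p q r : 'I_6) : i < 3 -> tpn i p -> tpn i q -> ~~ tpn i r -> p != q ->
    I [set g p; g q; g r].
  move=> hi ip iq nr pq; apply/negPn/negP => dep.
  have := line_closed hM hP r3 (hH i hi) (gt i p hi ip) (gt i q hi iq) _ (gE r) dep.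
  by rewrite (inj_eq ginj) pq => /(_ isT) /(capH i r hi); apply/negP.
have sgE (X : {set 'I_6}) : g @: X \subset E.
  by apply/subsetP => u /imsetP[x _ ->].
have cg (X : {set 'I_6}) : #|g @: X| = #|X| by rewrite card_imset.
pose J := if I (g @: tri 1 3 5) then W3_indep else MK4_indep.
have Jt i : i < 3 -> J (t i) = false.
  by case: i => [|[|[|]]] // _; rewrite /J; case: ifP => _; rewrite /W3_indep /MK4_indep /= eqxx ?andbF.
have It i : i < 3 -> I (g @: t i) = false.
  move=> hi; apply/negbTE; apply: (hyp_dep r3 (hH i hi)); last by rewrite cg card_t.
  by apply/subsetP => u /imsetP[x]; rewrite mem_t => hx ->; apply: gt.
have keyJ (X : {set 'I_6}) : I (g @: X) = J X.
  case: (ltngtP #|X| 3) => cX.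
  - have -> : I (g @: X) by apply: (small_indep hM hP r3 (sgE X)); rewrite cg; lia.
    have nt a b c : a < 6 -> b < 6 -> c < 6 -> a != b -> b != c -> a != c -> X != tri a b c.
      by move=> *; apply/eqP => e; move: cX; rewrite e card_tri.
    by rewrite /J; case: ifP => _; rewrite /W3_indep /MK4_indep !nt // ltnW.
  - have -> : I (g @: X) = false.
      by apply/negP => iX; have := indep_le3 r3 iX (sgE X); rewrite cg; lia.
    by rewrite /J; case: ifP => _; rewrite /W3_indep /MK4_indep leqNgt cX.
  have : 2 < #|X| by rewrite cX.
  move/card_gt2P => [p [q [r [[pX qX rX] [pq qr rp]]]]].
  have c3 : #|[set p; q; r]| = 3 by rewrite cards3 // eq_sym.
  have eX : X = [set p; q; r].
    apply/eqP; rewrite eq_sym eqEcard cX c3 leqnn andbT.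
    by rewrite !subUset !sub1set pX qX rX.
  rewrite eX.
  case a0: (allin 0 p q r).
    have -> : [set p; q; r] = t 0 by apply/eqP; rewrite eq_t3.
    by rewrite It ?Jt.
  case a1: (allin 1 p q r).
    have -> : [set p; q; r] = t 1 by apply/eqP; rewrite eq_t3.
    by rewrite It ?Jt.
  case a2: (allin 2 p q r).
    have -> : [set p; q; r] = t 2 by apply/eqP; rewrite eq_t3.
    by rewrite It ?Jt.
  case o: [&& o3 p, o3 q & o3 r].
    have -> : [set p; q; r] = tri 1 3 5 by apply/eqP; rewrite eq_135.
    by rewrite /J; case: ifP => h; [rewrite W3_135 | rewrite MK4_135].
  have -> : J [set p; q; r] = true.
    have n0 : [set p; q; r] != t 0 by rewrite eq_t3 // a0.
    have n1 : [set p; q; r] != t 1 by rewrite eq_t3 // a1.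
    have n2 : [set p; q; r] != t 2 by rewrite eq_t3 // a2.
    have n3 : [set p; q; r] != tri 1 3 5 by rewrite eq_135 // o.
    by rewrite /J; case: ifP => _; rewrite /W3_indep /MK4_indep c3 n0 n1 n2 ?n3.
  rewrite imset3.
  have pr : p != r by rewrite eq_sym.
  have [i hi H3] := C1 pq qr pr (negbT a0) (negbT a1) (negbT a2) (negbT o).
  case/or3P: H3 => /and3P[h1 h2 h3].
  - exact: key3 hi h1 h2 h3 pq.
  - rewrite (set3C (g p) (g r) (g q)); apply: key3 hi h1 h2 h3 _; by rewrite eq_sym.
  - rewrite -(set3R (g p) (g q) (g r)); exact: key3 hi h1 h2 h3 qr.
have rk0 : rk I set0 = 0.
  by have := rk_card I (set0 : {set T}); rewrite cards0; lia.
have Hmin (X : {set 'I_6}) : minor_indep E I set0 (E :\: g @: setT) (g @: X) = J X.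
  rewrite /minor_indep set0U setU0 rk0 addn0 (rk_indep _ hM) keyJ.
  have -> // : g @: X \subset E :\: (E :\: g @: setT).
  by apply/subsetP => u /imsetP[x _ ->]; rewrite !inE gE imset_f ?inE.
have Himg : g @: setT = E :\: (set0 :|: (E :\: g @: setT)).
  apply/setP => u; rewrite set0U !inE; case: (boolP (u \in g @: setT)) => h /=.
    by case/imsetP: h => x _ ->; rewrite gE.
  by rewrite andNb.
have dis : [disjoint (set0 : {set T}) & E :\: g @: setT].
  by apply: eq_disjoint0 => x; rewrite inE.
case h135: (I (g @: tri 1 3 5)); [left|right]; exists set0, (E :\: g @: setT);
  (split; [exact: sub0set | exact: subsetDl | exact: dis |]);
  exists g; split => // X; rewrite Hmin /J h135 //.
Qed.


Lemma W3_013 : W3_indep (tri 0 1 3).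
Proof.
rewrite /W3_indep card_tri //=.
rewrite (@neq_witness _ _ _ (e6 3)) ?mem_tri ?e6K //.
rewrite (@neq_witness _ _ _ (e6 0)) ?mem_tri ?e6K //.
by rewrite (@neq_witness _ _ _ (e6 1)) ?mem_tri ?e6K.
Qed.

Lemma MK4_013 : MK4_indep (tri 0 1 3).
Proof.
rewrite /MK4_indep card_tri //=.
rewrite (@neq_witness _ _ _ (e6 3)) ?mem_tri ?e6K //.
rewrite (@neq_witness _ _ _ (e6 0)) ?mem_tri ?e6K //.
rewrite (@neq_witness _ _ _ (e6 1)) ?mem_tri ?e6K //.
by rewrite (@neq_witness _ _ _ (e6 0)) ?mem_tri ?e6K.
Qed.

Lemma W3_t i : i < 3 -> W3_indep (t i) = false.
Proof. by case: i => [|[|[|]]] // _; rewrite /W3_indep /= eqxx ?andbF. Qed.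
Lemma MK4_t i : i < 3 -> MK4_indep (t i) = false.
Proof. by case: i => [|[|[|]]] // _; rewrite /MK4_indep /= eqxx ?andbF. Qed.

Lemma side d (T : finOrderType d) (E : {set T}) (I Ik : {set T} -> bool) (k : bool)
  (J : {set 'I_6} -> bool) :
  is_matroid E I -> rk I E = 3 -> paving E I ->
  is_matroid E Ik -> rk Ik E = 3 -> sparse_paving E Ik ->
  (forall V, circuit_hyperplane E Ik V = in_Vk k E I V) ->
  ~ has_minor_iso E I W3_indep -> ~ has_minor_iso E I MK4_indep ->
  J (tri 0 1 3) -> (forall i, i < 3 -> J (t i) = false) ->
  ~ has_minor_iso E Ik J.
Proof.
move=> hM r3 hP hMk rk3 [hPk hSk] hV nW nK J013 Jt [C [D [sCE sDE dis [g [ginj gim hJ]]]]].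
have gE x : g x \in E.
  have : g x \in g @: setT by apply: imset_f; rewrite inE.
  by rewrite gim !inE => /andP[_ ->].
have cg (X : {set 'I_6}) : #|g @: X| = #|X| by rewrite card_imset.
have sgE (X : {set 'I_6}) : g @: X \subset E.
  by apply/subsetP => u /imsetP[x _ ->].
have rk00 : rk Ik set0 = 0.
  by have := rk_card Ik (set0 : {set T}); rewrite cards0; lia.
have C0 : C = set0.
  have := hJ (tri 0 1 3); rewrite J013 /minor_indep => /andP[_ /eqP h].
  have c013 : #|g @: tri 0 1 3| = 3 by rewrite cg card_tri.
  have : rk Ik (g @: tri 0 1 3 :|: C) <= 3.
    by rewrite -[X in _ <= X]rk3; apply: rk_mono; rewrite subUset sgE sCE.
  rewrite h c013 => hle.
  apply/eqP; rewrite -subset0; apply/subsetP => x xC.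
  have : 1 <= rk Ik C.
    have <- : #|[set x]| = 1 by rewrite cards1.
    apply: rk_ge; first by rewrite sub1set.
    apply: (small_indep hMk hPk rk3); last by rewrite cards1.
    by rewrite sub1set (subsetP sCE).
  lia.
have gimE : g @: setT = E :\: D by rewrite gim C0 set0U.
have dep i : i < 3 -> ~~ Ik (g @: t i).
  move=> hi; apply/negP => ind.
  have := hJ (t i); rewrite Jt // /minor_indep C0 setU0 set0U.
  rewrite rk00 addn0 (rk_indep _ hMk) ind andbT.
  have -> // : g @: t i \subset E :\: D.
  by rewrite -gimE; apply: imsetS; apply: subsetT.
have hyp i : i < 3 -> exists H, hyperplane E I H && consecutive H (g @: t i).
  move=> hi.
  have ch : circuit_hyperplane E Ik (g @: t i).
    have [Cc sCc cCc] := dep_circuit hMk (sgE _) (dep i hi).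
    have c3 := circuit_card hPk rk3 cCc.
    have eC : Cc = g @: t i.
      by apply/eqP; rewrite eqEcard sCc cg card_t.
    rewrite /circuit_hyperplane -eC cCc /=.
    apply: (hSk _ cCc); rewrite rk3.
    have nC : ~~ Ik Cc by case/and3P: cCc.
    have cC3 : #|Cc| = 3 by rewrite eC cg card_t.
    apply: (@leq_ltn_trans 2) => //; apply: rk_le => Y sY iY.
    rewrite leqNgt; apply/negP => cY.
    have eY : Y == Cc by rewrite eqEcard sY cC3.
    by move/eqP: eY iY => ->; apply/negP.
  have := hV (g @: t i); rewrite ch => /esym /existsP [H /andP [hH /andP [cH _]]].
  by exists H; rewrite hH cH.
pose Hf i := odflt set0 [pick H | hyperplane E I H && consecutive H (g @: t i)].
have hHf i : i < 3 -> hyperplane E I (Hf i) && consecutive (Hf i) (g @: t i).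
  move=> hi; rewrite /Hf; case: pickP => [H -> //|none].
  by have [H hH] := hyp i hi; rewrite none in hH.
case: (@mside _ _ E I g Hf hM r3 hP ginj gE).
- by move=> i hi; case/andP: (hHf i hi).
- by move=> i hi; case/andP: (hHf i hi).
- by move/nW.
- by move/nK.
Qed.

Theorem lemma11 (d : Order.disp_t) (T : finOrderType d) (E : {set T})
    (I I0 I1 : {set T} -> bool) :
  is_matroid E I -> rk I E = 3 -> paving E I ->
  is_matroid E I0 -> rk I0 E = 3 -> sparse_paving E I0 ->
  (forall V, circuit_hyperplane E I0 V = in_Vk false E I V) ->
  is_matroid E I1 -> rk I1 E = 3 -> sparse_paving E I1 ->
  (forall V, circuit_hyperplane E I1 V = in_Vk true E I V) ->
  ~ has_minor_iso E I W3_indep -> ~ has_minor_iso E I MK4_indep ->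
  (~ has_minor_iso E I0 W3_indep /\ ~ has_minor_iso E I0 MK4_indep) /\
  (~ has_minor_iso E I1 W3_indep /\ ~ has_minor_iso E I1 MK4_indep).
Proof.
move=> hM r3 hP hM0 r0 hS0 hV0 hM1 r1 hS1 hV1 nW nK.
split; split.
- exact: (side hM r3 hP hM0 r0 hS0 hV0 nW nK W3_013 W3_t).
- exact: (side hM r3 hP hM0 r0 hS0 hV0 nW nK MK4_013 MK4_t).
- exact: (side hM r3 hP hM1 r1 hS1 hV1 nW nK W3_013 W3_t).
- exact: (side hM r3 hP hM1 r1 hS1 hV1 nW nK MK4_013 MK4_t).
Qed.
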